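(* Let $n\ge2$ and $h\in(0,1]$. (a) If $\epsilon\in[0,1]$ and $(\bar\omega_k)_{k=0}^{2n}$ satisfies $\bar\omega_k\in C(k,0,0)$, $\bar\omega_{n+k}\in C(n,k,k)$ for $k=0,\dots,n$, then $\max_kH(\bar\omega_k)$ equals $H(\bar\omega_{n/2})=n-\frac{n^2}2+hn$ if $n$ is even; $H(\bar\omega_{(n+1)/2})=n-\frac{n^2+1}2+\epsilon+h(n-1)$ if $n$ is odd and $h\le\epsilon$; $H(\bar\omega_{(n-1)/2})=n-\frac{n^2+1}2-\epsilon+h(n+1)$ if $n$ is odd and $\epsilon<h$. (b) If $0<h<-\epsilon\le1$ and $(\check\omega_k)_{k=0}^{2n}$ satisfies $\check\omega_k\in C(n-k,0,0)$, $\check\omega_{n+k}\in C(0,k,0)$ for $k=0,\dots,n$, then $\max_kH(\check\omega_k)$ equals $H(\check\omega_{n/2})=H(\check\omega_{n+n/2})=n-\frac{n^2}2+hn$ if $n$ is even and $h-\epsilon<1$; $H(\check\omega_{(n+2)/2})=H(\check\omega_{n+(n-2)/2})=n-\frac{n^2}2-2(\epsilon+1)+h(n+2)$ if $n$ is even and $1\le h-\epsilon<2$; $H(\check\omega_{(n+1)/2})=H(\check\omega_{n+(n-1)/2})=n-\frac{n^2+1}2-\epsilon+h(n+1)$ if $n$ is odd. (c) If $0<-\epsilon<h\le1$ and $(\tilde\omega_k)_{k=0}^{n}$ satisfies $\tilde\omega_k\in C(n,k,k)$ for $k=0,\dots,n$, then $\max_kH(\tilde\omega_k)$ equals $H(\tilde\omega_{n/2})=n-\frac{n^2}2-hn$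 if $n$ is even, and $H(\tilde\omega_{(n-1)/2})=n-\frac{n^2+1}2+\epsilon-h(n-1)$ if $n$ is odd.
   Context: The graph $\mathcal G(2,n)$ has vertex set $V=V^{(1)}\cup V^{(2)}$ with $V^{(1)}=\{1,\dots,n\}$, $V^{(2)}=\{n+1,\dots,2n\}$; its edge set is $E=E_{\mathrm{int}}\cup E_{\mathrm{cross}}$, where $E_{\mathrm{int}}$ consists of all pairs of distinct vertices in the same $V^{(k)}$ and $E_{\mathrm{cross}}=\{\{i,i+n\}:1\le i\le n\}$. For $\sigma\in\{-1,+1\}^V$, $H(\sigma)=-\sum_{\{i,j\}\in E_{\mathrm{int}}}\sigma_i\sigma_j-\epsilon\sum_{\{i,j\}\in E_{\mathrm{cross}}}\sigma_i\sigma_j-h\sum_{i\in V}\sigma_i$, with $\epsilon\in[-1,1]$. $C(p_1,p_2,a)$ is the set of configurations with exactly $p_1$ vertices of spin $+1$ in $V^{(1)}$, exactly $p_2$ vertices of spin $+1$ in $V^{(2)}$, and exactly $a$ cross-edges both of whose endpoints have spin $+1$ ($H$ is constant on each such set). *)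

(* Defs.v *)
From mathcomp Require Import all_boot all_order all_algebra.
Set Implicit Arguments. Unset Strict Implicit. Unset Printing Implicit Defensive.
Import Order.TTheory GRing.Theory Num.Theory.
Local Open Scope ring_scope.

(* Vertices of G(2,n): 'I_(2*n), 0-based.  V^(1) = {i | i < n},
   V^(2) = {i | n <= i}.  Cross edges: {i, i+n} for i < n. *)
Definition config (n : nat) := {ffun 'I_(2 * n) -> bool}.

Definition spin (R : ringType) (b : bool) : R := if b then 1 else -1.

Definition same_block (n : nat) (i j : 'I_(2 * n)) : bool :=
  ((i < n) == (j < n))%N.

Definition int_edge (n : nat) (i j : 'I_(2 * n)) : bool :=
  (i < j)%N && same_block i j.

Definition cross_edge (n : nat) (i j : 'I_(2 * n)) : bool :=
  (i < n)%N && (nat_of_ord j == i + n)%N.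

Definition Ham (R : ringType) (n : nat) (eps h : R) (s : config n) : R :=
  - (\sum_(i : 'I_(2 * n)) \sum_(j : 'I_(2 * n) | int_edge i j)
        spin R (s i) * spin R (s j))
  - eps * (\sum_(i : 'I_(2 * n)) \sum_(j : 'I_(2 * n) | cross_edge i j)
        spin R (s i) * spin R (s j))
  - h * (\sum_(i : 'I_(2 * n)) spin R (s i)).

Definition Cset (n p1 p2 a : nat) : {set config n} :=
  [set s : config n |
    [&& #|[set i : 'I_(2 * n) | (i < n)%N && s i]| == p1,
        #|[set i : 'I_(2 * n) | (n <= i)%N && s i]| == p2 &
        #|[set e : 'I_(2 * n) * 'I_(2 * n) |
            [&& cross_edge e.1 e.2, s e.1 & s e.2]]| == a]].

Definition maxH (R : realDomainType) (n : nat) (eps h : R)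
    (omega : nat -> config n) (N : nat) : R :=
  \big[Num.max/Ham eps h (omega 0%N)]_(k < N.+1) Ham eps h (omega k).

(* Main.v *)
Require Import Defs.
From mathcomp Require Import all_boot all_order all_algebra.
From mathcomp Require Import zify ring lra.
Set Implicit Arguments. Unset Strict Implicit. Unset Printing Implicit Defensive.
Import Order.TTheory GRing.Theory Num.Theory.
Local Open Scope ring_scope.

Section HamFormula.
Variable (R : realFieldType) (n : nat).

Lemma rot_lt (i : 'I_(2 * n)) : ((i + n) %% (2 * n) < 2 * n)%N.
Proof. apply: ltn_pmod; exact: leq_ltn_trans (leq0n i) (ltn_ord i). Qed.

Definition rot (i : 'I_(2 * n)) : 'I_(2 * n) := Ordinal (rot_lt i).

Lemma rot_lo (i : 'I_(2 * n)) : (i < n)%N -> nat_of_ord (rot i) = (i + n)%N.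
Proof. move=> H; rewrite /= modn_small //; lia. Qed.

Lemma rot_hi (i : 'I_(2 * n)) : (n <= i)%N -> nat_of_ord (rot i) = (i - n)%N.
Proof.
move=> H; rewrite /=. have Hi := ltn_ord i.
have -> : (i + n = (i - n) + 2 * n)%N by lia.
rewrite modnDr modn_small //; lia.
Qed.

Lemma rot_invol : involutive rot.
Proof.
move=> i; apply: val_inj; change (nat_of_ord (rot (rot i)) = nat_of_ord i). have Hi := ltn_ord i. case: (ltnP i n) => H.
  have H1 := rot_lo H. rewrite (@rot_hi (rot i)) H1 //; lia.
have H1 := rot_hi H. rewrite (@rot_lo (rot i)) H1 //; lia.
Qed.

Lemma rot_inj : injective rot.
Proof. exact: inv_inj rot_invol. Qed.

Lemma rot_ltn (i : 'I_(2 * n)) : (rot i < n)%N = ~~ (i < n)%N.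
Proof.
case: (ltnP i n) => H; first by rewrite rot_lo //; lia.
rewrite rot_hi //; have := ltn_ord i; lia.
Qed.

Lemma crossE (G : 'I_(2 * n) -> R) (i : 'I_(2 * n)) :
  \sum_(j | cross_edge i j) G j = if (i < n)%N then G (rot i) else 0.
Proof.
case: ifP => H.
  rewrite (eq_bigl (pred1 (rot i))) ?big_pred1_eq // => j /=.
  by rewrite /cross_edge H -val_eqE /= modn_small //; lia.
by rewrite (eq_bigl pred0) ?big_pred0_eq // => j; rewrite /cross_edge H.
Qed.

Variable (s : config n).
Local Notation sg i := (spin R (s i)).

Lemma spinE (b : bool) : spin R b = 2 * (b : nat)%:R - 1.
Proof. by case: b => /=; rewrite ?mulr1 ?mulr0; lra. Qed.

Lemma spin2 (b : bool) : spin R b * spin R b = 1.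
Proof. by case: b; rewrite /= ?mulNr ?mulrN ?opprK mulr1. Qed.

Lemma T1 : \sum_(i : 'I_(2 * n)) \sum_(j | same_block i j) sg i * sg j =
  (\sum_(i : 'I_(2 * n) | (i < n)%N) sg i) ^+ 2 + (\sum_(i : 'I_(2 * n) | ~~ (i < n)%N) sg i) ^+ 2.
Proof.
rewrite (bigID (fun i : 'I_(2 * n) => (i < n)%N)) /= !expr2.
congr (_ + _); rewrite mulr_suml; apply: eq_bigr => i Hi; rewrite -mulr_sumr;
  congr (_ * _); apply: eq_bigl => j; rewrite /same_block.
  by rewrite Hi; case: (j < n)%N.
by rewrite (negbTE Hi); case: (j < n)%N.
Qed.

Lemma inner_split (i : 'I_(2 * n)) (F : 'I_(2 * n) -> R) :
  \sum_(j | same_block i j) F j =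
  F i + \sum_(j | int_edge i j) F j + \sum_(j : 'I_(2 * n) | (j < i)%N && same_block i j) F j.
Proof.
rewrite (bigD1 i) /=; last by rewrite /same_block eqxx.
rewrite -addrA; congr (_ + _).
rewrite (bigID (fun j : 'I_(2 * n) => (i < j)%N)) /=; congr (_ + _);
  apply: eq_bigl => j; rewrite /int_edge -val_eqE /=;
  by case: (ltngtP i j); rewrite ?andbT ?andbF //= => ->; rewrite eqxx andbF.
Qed.

Lemma swap_sum (P : 'I_(2 * n) -> 'I_(2 * n) -> bool) (F : 'I_(2 * n) -> 'I_(2 * n) -> R) :
  \sum_i \sum_(j | P i j) F i j = \sum_i \sum_(j | P j i) F j i.
Proof.
rewrite (eq_bigr (fun i => \sum_j if P i j then F i j else 0)); last by move=> i _; rewrite big_mkcond.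
rewrite exchange_big /=; apply: eq_bigr => i _; by rewrite [RHS]big_mkcond.
Qed.

Lemma T2 : \sum_(i : 'I_(2 * n)) \sum_(j | same_block i j) sg i * sg j =
  (2 * n)%:R + 2 * \sum_(i : 'I_(2 * n)) \sum_(j | int_edge i j) sg i * sg j.
Proof.
rewrite (eq_bigr (fun i => sg i * sg i + \sum_(j | int_edge i j) sg i * sg j
    + \sum_(j : 'I_(2 * n) | (j < i)%N && same_block i j) sg i * sg j)); last first.
  by move=> i _; rewrite inner_split.
rewrite !big_split /= (eq_bigr (fun _ => 1)); last by move=> i _; rewrite spin2.
rewrite sumr_const card_ord -addrA; congr (_ + _).
rewrite mulr2n mulrDl mul1r; congr (_ + _).
rewrite swap_sum; apply: eq_bigr => i _; apply: eq_big => j.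
  by rewrite /int_edge /same_block eq_sym.
by move=> _; rewrite mulrC.
Qed.

Local Notation b i := ((s i : nat)%:R : R).

Lemma card_sum (P : pred 'I_(2 * n)) p :
  #|[set i : 'I_(2 * n) | P i && s i]| = p -> \sum_(i | P i) b i = p%:R.
Proof.
move=> <-; rewrite -sum1_card natr_sum.
rewrite [RHS](eq_bigl (fun i => P i && s i)); last by move=> i /=; rewrite inE.
by rewrite [RHS]big_mkcondr /=; apply: eq_bigr => i _; case: (s i).
Qed.

Lemma cnt_lo : \sum_(i : 'I_(2 * n) | (i < n)%N) (1 : R) = n%:R.
Proof.
have le : (n <= 2 * n)%N by lia.
by rewrite (big_ord_narrow le) sumr_const card_ord.
Qed.

Lemma cnt_hi : \sum_(i : 'I_(2 * n) | ~~ (i < n)%N) (1 : R) = n%:R.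
Proof.
have H : \sum_(i : 'I_(2 * n)) (1:R) = \sum_(i : 'I_(2 * n) | (i < n)%N) (1 : R)
   + \sum_(i : 'I_(2 * n) | ~~ (i < n)%N) (1 : R) by rewrite (bigID (fun i : 'I_(2 * n) => (i < n)%N)) /=.
move: H; rewrite cnt_lo sumr_const card_ord natrM => H.
have -> : \sum_(i : 'I_(2 * n) | ~~ (i < n)%N) (1:R) = (2%:R * n%:R) - n%:R.
  by rewrite H addrC addKr.
by rewrite mulr_natl mulr2n addrK.
Qed.

Lemma sum_sg (P : pred 'I_(2 * n)) :
  \sum_(i | P i) sg i = 2 * \sum_(i | P i) b i - \sum_(i | P i) 1.
Proof. by rewrite mulr_sumr -sumrB; apply: eq_bigr => i _; rewrite spinE. Qed.

Lemma CS_E : \sum_(i : 'I_(2 * n)) \sum_(j | cross_edge i j) sg i * sg j =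
  \sum_(i : 'I_(2 * n) | (i < n)%N) sg i * sg (rot i).
Proof.
rewrite [RHS]big_mkcond; apply: eq_bigr => i _.
by rewrite (crossE (fun j => sg i * sg j)).
Qed.

Lemma card_cross a :
  #|[set e : 'I_(2 * n) * 'I_(2 * n) | [&& cross_edge e.1 e.2, s e.1 & s e.2]]| = a ->
  \sum_(i : 'I_(2 * n) | (i < n)%N) b i * b (rot i) = a%:R.
Proof.
move=> <-; rewrite -sum1_card natr_sum.
rewrite [RHS](eq_bigl (fun e : 'I_(2 * n) * 'I_(2 * n) => true && (cross_edge e.1 e.2 && (s e.1 && s e.2)))); last by move=> e /=; rewrite inE.
rewrite -(pair_big_dep xpredT (fun i j => cross_edge i j && (s i && s j)) (fun _ _ => 1%:R)) /=.
rewrite [LHS]big_mkcond; apply: eq_bigr => i _.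
rewrite big_mkcondr /= (crossE (fun j => if s i && s j then 1%:R else 0)).
by case: (i < n)%N => //; case: (s i); case: (s (rot i)); rewrite /= ?mulr1 ?mulr0 ?mul0r.
Qed.

Lemma rot_sum : \sum_(i : 'I_(2 * n) | (i < n)%N) b (rot i) =
  \sum_(i : 'I_(2 * n) | ~~ (i < n)%N) b i.
Proof.
rewrite [RHS](reindex_inj rot_inj) /=; apply: eq_bigl => i.
by rewrite rot_ltn negbK.
Qed.

Lemma HamE (eps h : R) p1 p2 a : s \in Cset n p1 p2 a ->
  Ham eps h s = - (((2 * p1%:R - n%:R) ^+ 2 + (2 * p2%:R - n%:R) ^+ 2 - 2 * n%:R) / 2)
    - eps * (4 * a%:R - 2 * p1%:R - 2 * p2%:R + n%:R)
    - h * (2 * p1%:R + 2 * p2%:R - 2 * n%:R).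
Proof.
rewrite inE => /and3P [/eqP H1 /eqP H2 /eqP H3].
have A := card_sum (P := fun i => (i < n)%N) H1.
have B := card_sum (P := fun i => (n <= i)%N) H2.
have C := card_cross H3.
have B' : \sum_(i : 'I_(2 * n) | ~~ (i < n)%N) b i = p2%:R.
  by rewrite -B; apply: eq_bigl => i; rewrite -leqNgt.
have S1E : \sum_(i : 'I_(2 * n) | (i < n)%N) sg i = 2 * p1%:R - n%:R.
  by rewrite sum_sg cnt_lo A.
have S2E : \sum_(i : 'I_(2 * n) | ~~ (i < n)%N) sg i = 2 * p2%:R - n%:R.
  by rewrite sum_sg cnt_hi B'.
have hT := T1; rewrite T2 S1E S2E in hT.
rewrite /Ham.
set IS := \sum_(i : 'I_(2 * n)) \sum_(j | int_edge i j) sg i * sg j.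
have -> : IS = (2 * IS) / 2 by field.
have -> : 2 * IS = (2 * p1%:R - n%:R) ^+ 2 + (2 * p2%:R - n%:R) ^+ 2 - 2 * n%:R.
  move: hT; rewrite -/IS natrM => hT; lra.
rewrite CS_E.
rewrite (eq_bigr (fun i => 4 * (b i * b (rot i)) + (-2) * b i + (-2) * b (rot i) + 1)); last first.
  by move=> i _; rewrite !spinE; ring.
rewrite !big_split /= -!mulr_sumr C A rot_sum B' cnt_lo.
rewrite (bigID (fun i : 'I_(2 * n) => (i < n)%N)) /= S1E S2E.
ring.
Qed.

End HamFormula.

Section MaxLemma.
Variable R : realDomainType.

Lemma big_max_ge (N : nat) (x0 : R) (F : nat -> R) j : (j <= N)%N ->
  F j <= \big[Num.max/x0]_(k < N.+1) F k.
Proof.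
elim: N x0 F j => [|N IH] x0 F j Hj.
  rewrite big_ord_recl big_ord0 le_max; apply/orP; left.
  by have -> : j = 0%N by lia.
rewrite big_ord_recl le_max; apply/orP.
case: j Hj => [|j] Hj; first by left.
right; exact: (IH x0 (fun k => F k.+1) j).
Qed.

Lemma big_max_le (N : nat) (x0 M : R) (F : nat -> R) :
  x0 <= M -> (forall k, (k <= N)%N -> F k <= M) ->
  \big[Num.max/x0]_(k < N.+1) F k <= M.
Proof.
move=> H0 HF; elim/big_ind: _ => //.
  by move=> x y Hx Hy; rewrite ge_max Hx Hy.
by move=> i _; apply: HF; have := ltn_ord i; lia.
Qed.

Lemma maxH_eq n (eps h : R) (omega : nat -> config n) N j : (j <= N)%N ->
  (forall k, (k <= N)%N -> Ham eps h (omega k) <= Ham eps h (omega j)) ->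
  maxH eps h omega N = Ham eps h (omega j).
Proof.
move=> Hj HF; apply/eqP; rewrite eq_le; apply/andP; split.
  rewrite /maxH; apply: (big_max_le (F := fun k => Ham eps h (omega k))) => //; exact: HF.
exact: (big_max_ge _ (fun k => Ham eps h (omega k)) Hj).
Qed.
End MaxLemma.

Section Quad.
Variable R : realFieldType.

Lemma gap (k q : nat) : 0 <= (k%:R - q%:R) * (k%:R - q%:R - 1) :> R.
Proof.
case: (leqP k q) => H.
  have : k%:R <= q%:R :> R by rewrite ler_nat.
  nra.
have : q.+1%:R <= k%:R :> R by rewrite ler_nat.
rewrite -natr1; nra.
Qed.

Lemma Qeven (c t : R) : -1 <= c -> c <= 1 -> 0 <= t * (t - 1) -> 0 <= (t + 1) * t ->
  - (2 * t) ^+ 2 / 2 + c * (2 * t) <= 0.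
Proof. move=> *; nra. Qed.

Lemma Qeven2 (c t : R) : 1 <= c -> c <= 2 -> 0 <= t * (t - 1) ->
  - (2 * t) ^+ 2 / 2 + c * (2 * t) <= -2 + 2 * c.
Proof.
move=> H1 H2 H3.
have h1 : 0 <= (2 - c) * (t * (t - 1)) by apply: mulr_ge0 => //; lra.
have h2 : 0 <= (c - 1) * ((t - 1) * (t - 1)) by apply: mulr_ge0; [lra| nra].
nra.
Qed.

Lemma Qodd (c t : R) : 0 <= c -> c <= 2 -> 0 <= t * (t - 1) -> 0 <= (t - 1) * (t - 2) ->
  - (2 * t - 1) ^+ 2 / 2 + c * (2 * t - 1) <= - (1 / 2) + c.
Proof. move=> *; nra. Qed.

Lemma Qodd' (c t : R) : -2 <= c -> c <= 0 -> 0 <= t * (t - 1) -> 0 <= (t + 1) * t ->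
  - (2 * t - 1) ^+ 2 / 2 + c * (2 * t - 1) <= - (1 / 2) - c.
Proof. move=> *; nra. Qed.
Lemma gapP (k q : nat) : 0 <= (k%:R - q%:R + 1) * (k%:R - q%:R) :> R.
Proof. have := gap k.+1 q; rewrite -natr1; nra. Qed.
Lemma gapM (k q : nat) : 0 <= (k%:R - q%:R - 1) * (k%:R - q%:R - 2) :> R.
Proof. have := gap k q.+1; rewrite -natr1; nra. Qed.
End Quad.

Lemma part_a (R : realFieldType) (n : nat) (h : R) :
  (2 <= n)%N -> 0 < h -> h <= 1 ->
  (forall (eps : R) (omega : nat -> config n),
     0 <= eps -> eps <= 1 ->
     (forall k, (k <= n)%N ->
        omega k \in Cset n k 0 0 /\ omega (n + k)%N \in Cset n n k k) ->
     (~~ odd n ->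
        maxH eps h omega (2 * n) = Ham eps h (omega n./2) /\
        Ham eps h (omega n./2) = n%:R - (n ^ 2)%:R / 2 + h * n%:R) /\
     (odd n -> h <= eps ->
        maxH eps h omega (2 * n) = Ham eps h (omega n.+1./2) /\
        Ham eps h (omega n.+1./2)
          = n%:R - (n ^ 2 + 1)%:R / 2 + eps + h * (n - 1)%:R) /\
     (odd n -> eps < h ->
        maxH eps h omega (2 * n) = Ham eps h (omega n.-1./2) /\
        Ham eps h (omega n.-1./2)
          = n%:R - (n ^ 2 + 1)%:R / 2 - eps + h * (n + 1)%:R)).
Proof.
move=> Hn Hh0 Hh1 eps omega He0 He1 Hom.
have E1 k (Hk : (k <= n)%N) := HamE eps h (Hom k Hk).1.
have E2 k (Hk : (k <= n)%N) := HamE eps h (Hom k Hk).2.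
have C k : (k <= n)%N -> Ham eps h (omega (n + k)%N) <= Ham eps h (omega (n - k)%N).
  move=> Hk; rewrite E2 // E1 ?leq_subr // natrB //.
  have : 0 <= h * k%:R by apply: mulr_ge0; [lra | exact: ler0n].
  nra.
have Red : forall M, (forall k, (k <= n)%N -> Ham eps h (omega k) <= M) ->
    forall k, (k <= 2 * n)%N -> Ham eps h (omega k) <= M.
  move=> M HM k Hk; case: (leqP k n) => Hkn; first exact: HM.
  have -> : k = (n + (k - n))%N by lia.
  apply: le_trans (C _ _) _; first lia.
  apply: HM; lia.
have Hq := odd_double_half n; set q := n./2 in Hq *; have Hqd : n./2 = q by []; clearbody q.
split; [|split].
- move=> Hev; rewrite (negbTE Hev) /= in Hq.
  have HN : n%:R = 2 * q%:R :> R by rewrite -Hq -mul2n natrM.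
  have Hqn : (q <= n)%N by lia.
  split.
    apply: maxH_eq; first lia.
    apply: Red => k Hk; rewrite E1 // E1 // HN.
    have := Qeven (c := eps - h) (t := k%:R - q%:R) ltac:(lra) ltac:(lra) (@gap R k q) (@gapP R k q).
    nra.
  by rewrite E1 // natrX HN; field.
- move=> Hod Hle; move: Hq; rewrite Hod /= => Hq.
  have Hq2 : n = (2 * q + 1)%N by lia.
  have HN : n%:R = 2 * q%:R + 1 :> R by rewrite {1}Hq2 natrD natrM.
  have -> : uphalf n = q.+1 by change (n.+1./2 = q.+1); lia.
  have Hqn : (q.+1 <= n)%N by lia.
  split.
    apply: maxH_eq; first lia.
    apply: Red => k Hk; rewrite E1 // E1 // HN -[(q.+1)%:R]natr1.
    have := Qodd (c := eps - h) (t := k%:R - q%:R) ltac:(lra) ltac:(lra) (@gap R k q) (@gapM R k q).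
    nra.
  rewrite E1 // natrD natrX natrB; last lia.
  by rewrite HN -[(q.+1)%:R]natr1; field.
- move=> Hod Hlt; move: Hq; rewrite Hod /= => Hq.
  have Hq2 : n = (2 * q + 1)%N by lia.
  have HN : n%:R = 2 * q%:R + 1 :> R by rewrite {1}Hq2 natrD natrM.
  have -> : n.-1./2 = q by lia.
  have Hqn : (q <= n)%N by lia.
  split.
    apply: maxH_eq; first lia.
    apply: Red => k Hk; rewrite E1 // E1 // HN.
    have := Qodd' (c := eps - h) (t := k%:R - q%:R) ltac:(lra) ltac:(lra) (@gap R k q) (@gapP R k q).
    nra.
  by rewrite E1 // !natrD natrX HN; field.
Qed.

Lemma part_b (R : realFieldType) (n : nat) (h : R) :
  (2 <= n)%N -> 0 < h -> h <= 1 ->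
  (forall (eps : R) (omega : nat -> config n),
     h < - eps -> - eps <= 1 ->
     (forall k, (k <= n)%N ->
        omega k \in Cset n (n - k) 0 0 /\ omega (n + k)%N \in Cset n 0 k 0) ->
     (~~ odd n -> h - eps < 1 ->
        maxH eps h omega (2 * n) = Ham eps h (omega n./2) /\
        Ham eps h (omega n./2) = Ham eps h (omega (n + n./2)%N) /\
        Ham eps h (omega n./2) = n%:R - (n ^ 2)%:R / 2 + h * n%:R) /\
     (~~ odd n -> 1 <= h - eps -> h - eps < 2 ->
        maxH eps h omega (2 * n) = Ham eps h (omega n.+2./2) /\
        Ham eps h (omega n.+2./2) = Ham eps h (omega (n + (n - 2)./2)%N) /\
        Ham eps h (omega n.+2./2)
          = n%:R - (n ^ 2)%:R / 2 - 2 * (eps + 1) + h * (n + 2)%:R) /\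
     (odd n ->
        maxH eps h omega (2 * n) = Ham eps h (omega n.+1./2) /\
        Ham eps h (omega n.+1./2) = Ham eps h (omega (n + n.-1./2)%N) /\
        Ham eps h (omega n.+1./2)
          = n%:R - (n ^ 2 + 1)%:R / 2 - eps + h * (n + 1)%:R)).
Proof.
move=> Hn Hh0 Hh1 eps omega He0 He1 Hom.
have E1 k (Hk : (k <= n)%N) := HamE eps h (Hom k Hk).1.
have E2 k (Hk : (k <= n)%N) := HamE eps h (Hom k Hk).2.
have S k : (k <= n)%N -> Ham eps h (omega (n + k)%N) = Ham eps h (omega (n - k)%N).
  move=> Hk; rewrite E2 // E1 ?leq_subr // subKn //; ring.
have Red : forall M, (forall k, (k <= n)%N -> Ham eps h (omega k) <= M) ->
    forall k, (k <= 2 * n)%N -> Ham eps h (omega k) <= M.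
  move=> M HM k Hk; case: (leqP k n) => Hkn; first exact: HM.
  have -> : k = (n + (k - n))%N by lia.
  rewrite S; last lia.
  apply: HM; lia.
have Hq := odd_double_half n; set q := n./2 in Hq *; have Hqd : n./2 = q by []; clearbody q.
split; [|split].
- move=> Hev Hc; rewrite (negbTE Hev) /= in Hq.
  have HN : n%:R = 2 * q%:R :> R by rewrite -Hq -mul2n natrM.
  have Hqn : (q <= n)%N by lia.
  try rewrite Hqd.
  split; [|split].
  + apply: maxH_eq; first lia.
    apply: Red => k Hk; rewrite E1 // E1 // !natrB // HN.
    have := Qeven (c := h - eps) (t := k%:R - q%:R) ltac:(lra) ltac:(lra) (@gap R k q) (@gapP R k q).
    nra.
  + rewrite S; last lia.
    by have -> : (n - q)%N = q by lia.
  + by rewrite E1 // natrX natrB // HN; field.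
- move=> Hev Hc1 Hc2; rewrite (negbTE Hev) /= in Hq.
  have HN : n%:R = 2 * q%:R :> R by rewrite -Hq -mul2n natrM.
  have Hqn : (q.+1 <= n)%N by lia.
  have -> : Ham eps h (omega n.+2./2) = Ham eps h (omega q.+1).
    by rewrite (_ : n.+2./2 = q.+1) //; lia.
  split; [|split].
  + apply: maxH_eq; first lia.
    apply: Red => k Hk; rewrite E1 // E1 // !natrB // HN -[(q.+1)%:R]natr1.
    have := Qeven2 (c := h - eps) (t := k%:R - q%:R) ltac:(lra) ltac:(lra) (@gap R k q).
    nra.
  + have -> : ((n - 2)./2)%N = q.-1 by lia.
    rewrite S; last lia.
    by have -> : (n - q.-1)%N = q.+1 by lia.
  + rewrite E1 // natrX natrB // natrD HN -[(q.+1)%:R]natr1; by field.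
- move=> Hod; move: Hq; rewrite Hod /= => Hq.
  have Hq2 : n = (2 * q + 1)%N by lia.
  have HN : n%:R = 2 * q%:R + 1 :> R by rewrite {1}Hq2 natrD natrM.
  have Hqn : (q.+1 <= n)%N by lia.
  have -> : Ham eps h (omega n.+1./2) = Ham eps h (omega q.+1).
    by rewrite (_ : n.+1./2 = q.+1) //; lia.
  split; [|split].
  + apply: maxH_eq; first lia.
    apply: Red => k Hk; rewrite E1 // E1 // !natrB // HN -[(q.+1)%:R]natr1.
    have := Qodd (c := h - eps) (t := k%:R - q%:R) ltac:(lra) ltac:(lra) (@gap R k q) (@gapM R k q).
    nra.
  + have -> : (n.-1./2)%N = q by lia.
    rewrite S; last lia.
    by have -> : (n - q)%N = q.+1 by lia.
  + rewrite E1 // !natrD natrX natrB // HN -[(q.+1)%:R]natr1; by field.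
Qed.

Lemma part_c (R : realFieldType) (n : nat) (h : R) :
  (2 <= n)%N -> 0 < h -> h <= 1 ->
  (forall (eps : R) (omega : nat -> config n),
     0 < - eps -> - eps < h ->
     (forall k, (k <= n)%N -> omega k \in Cset n n k k) ->
     (~~ odd n ->
        maxH eps h omega n = Ham eps h (omega n./2) /\
        Ham eps h (omega n./2) = n%:R - (n ^ 2)%:R / 2 - h * n%:R) /\
     (odd n ->
        maxH eps h omega n = Ham eps h (omega n.-1./2) /\
        Ham eps h (omega n.-1./2)
          = n%:R - (n ^ 2 + 1)%:R / 2 + eps - h * (n - 1)%:R)).
Proof.
move=> Hn Hh0 Hh1 eps omega He0 He1 Hom.
have E1 k (Hk : (k <= n)%N) := HamE eps h (Hom k Hk).
have Hq := odd_double_half n; set q := n./2 in Hq *; have Hqd : n./2 = q by []; clearbody q.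
split.
- move=> Hev; rewrite (negbTE Hev) /= in Hq.
  have HN : n%:R = 2 * q%:R :> R by rewrite -Hq -mul2n natrM.
  have Hqn : (q <= n)%N by lia.
  try rewrite Hqd; split.
  + apply: maxH_eq; first lia.
    move=> k Hk; rewrite E1 // E1 // HN.
    have := Qeven (c := - (eps + h)) (t := k%:R - q%:R) ltac:(lra) ltac:(lra) (@gap R k q) (@gapP R k q).
    nra.
  + by rewrite E1 // natrX HN; field.
- move=> Hod; move: Hq; rewrite Hod /= => Hq.
  have Hq2 : n = (2 * q + 1)%N by lia.
  have HN : n%:R = 2 * q%:R + 1 :> R by rewrite {1}Hq2 natrD natrM.
  have Hqn : (q <= n)%N by lia.
  have -> : Ham eps h (omega n.-1./2) = Ham eps h (omega q).
    by rewrite (_ : n.-1./2 = q) //; lia.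
  split.
  + apply: maxH_eq; first lia.
    move=> k Hk; rewrite E1 // E1 // HN.
    have := Qodd' (c := - (eps + h)) (t := k%:R - q%:R) ltac:(lra) ltac:(lra) (@gap R k q) (@gapP R k q).
    nra.
  + rewrite E1 // natrD natrX natrB; last lia.
    rewrite HN; by field.
Qed.

Theorem lemma5p2 (R : realFieldType) (n : nat) (h : R) :
  (2 <= n)%N -> 0 < h -> h <= 1 ->
  (* (a) *)
  (forall (eps : R) (omega : nat -> config n),
     0 <= eps -> eps <= 1 ->
     (forall k, (k <= n)%N ->
        omega k \in Cset n k 0 0 /\ omega (n + k)%N \in Cset n n k k) ->
     (~~ odd n ->
        maxH eps h omega (2 * n) = Ham eps h (omega n./2) /\
        Ham eps h (omega n./2) = n%:R - (n ^ 2)%:R / 2 + h * n%:R) /\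
     (odd n -> h <= eps ->
        maxH eps h omega (2 * n) = Ham eps h (omega n.+1./2) /\
        Ham eps h (omega n.+1./2)
          = n%:R - (n ^ 2 + 1)%:R / 2 + eps + h * (n - 1)%:R) /\
     (odd n -> eps < h ->
        maxH eps h omega (2 * n) = Ham eps h (omega n.-1./2) /\
        Ham eps h (omega n.-1./2)
          = n%:R - (n ^ 2 + 1)%:R / 2 - eps + h * (n + 1)%:R)) /\
  (* (b) *)
  (forall (eps : R) (omega : nat -> config n),
     h < - eps -> - eps <= 1 ->
     (forall k, (k <= n)%N ->
        omega k \in Cset n (n - k) 0 0 /\ omega (n + k)%N \in Cset n 0 k 0) ->
     (~~ odd n -> h - eps < 1 ->
        maxH eps h omega (2 * n) = Ham eps h (omega n./2) /\
        Ham eps h (omega n./2) = Ham eps h (omega (n + n./2)%N) /\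
        Ham eps h (omega n./2) = n%:R - (n ^ 2)%:R / 2 + h * n%:R) /\
     (~~ odd n -> 1 <= h - eps -> h - eps < 2 ->
        maxH eps h omega (2 * n) = Ham eps h (omega n.+2./2) /\
        Ham eps h (omega n.+2./2) = Ham eps h (omega (n + (n - 2)./2)%N) /\
        Ham eps h (omega n.+2./2)
          = n%:R - (n ^ 2)%:R / 2 - 2 * (eps + 1) + h * (n + 2)%:R) /\
     (odd n ->
        maxH eps h omega (2 * n) = Ham eps h (omega n.+1./2) /\
        Ham eps h (omega n.+1./2) = Ham eps h (omega (n + n.-1./2)%N) /\
        Ham eps h (omega n.+1./2)
          = n%:R - (n ^ 2 + 1)%:R / 2 - eps + h * (n + 1)%:R)) /\
  (* (c) *)
  (forall (eps : R) (omega : nat -> config n),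
     0 < - eps -> - eps < h ->
     (forall k, (k <= n)%N -> omega k \in Cset n n k k) ->
     (~~ odd n ->
        maxH eps h omega n = Ham eps h (omega n./2) /\
        Ham eps h (omega n./2) = n%:R - (n ^ 2)%:R / 2 - h * n%:R) /\
     (odd n ->
        maxH eps h omega n = Ham eps h (omega n.-1./2) /\
        Ham eps h (omega n.-1./2)
          = n%:R - (n ^ 2 + 1)%:R / 2 + eps - h * (n - 1)%:R)).
Proof.
move=> Hn Hh0 Hh1; split; first exact: (part_a Hn Hh0 Hh1).
split; first exact: (part_b Hn Hh0 Hh1).
exact: (part_c Hn Hh0 Hh1).
Qed.
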